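(* Let $Q=A_2\otimes E_8$ and $R=\sqrt3E_8$, and write $O(Q)=X\times Y$ with $X\cong Sym_3$ and $Y\cong O(E_8)$ as below. Let $L$ be an overlattice of $Q\perp R$ (contained in $\mathbb Q\otimes(Q\perp R)$) such that $L\cap\mathbb QQ=Q$, $L\cap\mathbb QR=R$, and $L$ is stable under $O_3(O(Q))$. Then $\mathrm{Stab}_{X\times Z(Y)}(L)\cong Sym_3$, and $C_{X\times Y}(\mathrm{Stab}_{X\times Z(Y)}(L))=Y$, the subgroup of $X\times Y$ fixing each of the three sets $\alpha\otimes\Psi$.
   Context: $A_2\otimes E_8$ is the tensor product lattice; $\sqrt3E_8$ is $E_8$ with form scaled by 3. With $\Psi$ the roots of $E_8$, the minimal (norm 4) vectors of $Q$ form three sets $\alpha\otimes\Psi$, $\alpha$ running over three pairwise nonproportional roots of $A_2$; $O(Q)=X\times Y$ where $X\cong Sym_3$ permutes these three sets (acting as $\alpha_i\otimes x\mapsto\alpha_{p(i)}\otimes x$ for roots $\alpha_1+\alpha_2+\alpha_3=0$) and $Y\cong O(E_8)$ fixes each set. Elements of $O(Q)$ act on $\mathbb Q\otimes(Q\perp R)$ by acting trivially on $R$. $O_3(O(Q))$ is the largest normal $3$-subgroup of $O(Q)$ and $Z(Y)$ is the center of $Y$; $\mathrm{Stab}$ and $C$ denote stabilizer and centralizer. *)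

(* Defs.v *)
From mathcomp Require Import all_boot all_order all_algebra all_fingroup.
Set Implicit Arguments. Unset Strict Implicit. Unset Printing Implicit Defensive.
Import GRing.Theory Num.Theory.
Local Open Scope ring_scope.

(* ---------- Coordinates ----------------------------------------------------
   E8 is Z^8 with Gram matrix E8gram (Cartan matrix of E8, Bourbaki numbering,
   0-indexed: edges 0-2, 2-3, 3-4, 4-5, 5-6, 6-7, 1-3).
   A2 has basis alpha_1, alpha_2 (simple roots); alpha_3 = -alpha_1-alpha_2,
   so alpha_1 + alpha_2 + alpha_3 = 0.
   A vector of Q(x)(Q _|_ R) is a pair (M, r) with M : 'M[rat]_(2,8) and
   r : 'rV[rat]_8, meaning  sum_{i,j} M i j alpha_i (x) b_j  (+)  sum_j r j b'_j
   where b_j is the basis of E8 and b'_j = sqrt3 b_j the basis of R = sqrt3 E8.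
   Q = A2 (x) E8 is the set of integral M, R the set of integral r. *)

Definition e8adj (i j : nat) : bool :=
  [|| (i == 0%N) && (j == 2%N), (i == 2%N) && (j == 3%N), (i == 3%N) && (j == 4%N),
      (i == 4%N) && (j == 5%N), (i == 5%N) && (j == 6%N), (i == 6%N) && (j == 7%N)
    | (i == 1%N) && (j == 3%N)].

Definition E8gram : 'M[rat]_8 :=
  \matrix_(i < 8, j < 8)
    (if i == j then 2 else if e8adj i j || e8adj j i then -1 else 0).

Definition intmx (m n : nat) (A : 'M[rat]_(m, n)) : Prop :=
  forall i j, exists z : int, A i j = z%:~R.

(* O(E8): integral matrices g (acting on row coordinate vectors x |-> x g)
   preserving the E8 form. *)
Definition OE8 (g : 'M[rat]_8) : Prop :=
  intmx g /\ g *m E8gram *m g^T = E8gram.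

Definition ZE8 (g : 'M[rat]_8) : Prop :=
  OE8 g /\ forall h, OE8 h -> g *m h = h *m g.

Definition alpha (k : 'I_3) : 'rV[rat]_2 :=
  if val k == 0%N then \row_(j < 2) (if val j == 0%N then 1 else 0)
  else if val k == 1%N then \row_(j < 2) (if val j == 1%N then 1 else 0)
  else \row_(j < 2) (-1).

(* the linear map alpha_i |-> alpha_{p(i)} on Q(x)A2, in row coordinates *)
Definition Xmat (p : 'S_3) : 'M[rat]_2 :=
  \matrix_(i < 2, j < 2) alpha (p (widen_ord (isT : 2 <= 3)%N i)) 0 j.

Definition V := ('M[rat]_(2, 8) * 'rV[rat]_8)%type.

Definition vsub (u w : V) : V := (u.1 - w.1, u.2 - w.2).
Definition vscale (n : nat) (u : V) : V := (n%:R *: u.1, n%:R *: u.2).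

Definition inQR (v : V) : Prop := intmx v.1 /\ intmx v.2.

Definition overlattice (L : V -> Prop) : Prop :=
  [/\ forall u w, L u -> L w -> L (vsub u w),
      forall v, inQR v -> L v &
      exists2 N : nat, (0 < N)%N & forall v, L v -> inQR (vscale N v)].

(* ---------- The group O(Q) = X x Y --------------------------------------------
   An element is a pair (p, g), p in Sym_3 (the X-component), g in O(E8)
   (the Y-component); X x Y is the direct product. It acts on Q(x)(Q _|_ R) by
   alpha_i (x) x |-> alpha_{p(i)} (x) x g on Q, trivially on R. *)
Definition G := ('S_3 * 'M[rat]_8)%type.

Definition mulG (x y : G) : G := ((x.1 * y.1)%g, x.2 *m y.2).
Definition oneG : G := (1%g, 1%:M).

(* (right) action: act (mulG x y) = act y \o act x *)
Definition act (x : G) (v : V) : V := ((Xmat x.1)^T *m v.1 *m x.2, v.2).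

Definition inXY (x : G) : Prop := OE8 x.2.
Definition inXZY (x : G) : Prop := ZE8 x.2.
Definition inY (x : G) : Prop := x.1 = 1%g /\ OE8 x.2.

Definition normal3sub (N : G -> Prop) : Prop :=
  [/\ forall x, N x -> inXY x,
      N oneG,
      forall x y, N x -> N y -> N (mulG x y),
      forall g n, inXY g -> N n -> exists2 n', N n' & mulG g n = mulG n' g &
      exists s : seq G, exists k : nat,
        [/\ uniq s, size s = (3 ^ k)%N & forall x, N x <-> x \in s]].

Definition stabilizes (L : V -> Prop) (x : G) : Prop :=
  forall v, L v <-> L (act x v).

Definition StabXZY (L : V -> Prop) (x : G) : Prop := inXZY x /\ stabilizes L x.

Definition isoSym3 (S : G -> Prop) : Prop :=
  exists f : 'S_3 -> G,
    [/\ injective f,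
        forall p q, f (p * q)%g = mulG (f p) (f q) &
        forall x, S x <-> exists p, x = f p].

Definition centXY (S : G -> Prop) (x : G) : Prop :=
  inXY x /\ forall s, S s -> mulG x s = mulG s x.

(* Main.v *)
Require Import Defs.
From mathcomp Require Import all_boot all_order all_algebra all_fingroup all_solvable.
From mathcomp Require Import lra zify.
Set Implicit Arguments. Unset Strict Implicit. Unset Printing Implicit Defensive.
Import GRing.Theory Num.Theory.
Local Open Scope ring_scope.


Lemma intmxP m n (A : 'M[rat]_(m, n)) : intmx A <-> forall i j, A i j \is a Num.int.
Proof.
split=> H i j; first by have [z ->] := H i j; exact: intr_int.
by apply/intrP; apply: H.
Qed.

Lemma intmxD m n (A B : 'M[rat]_(m, n)) : intmx A -> intmx B -> intmx (A + B).
Proof. by move=> /intmxP HA /intmxP HB; apply/intmxP=> i j; rewrite mxE rpredD. Qed.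
Lemma intmxN m n (A : 'M[rat]_(m, n)) : intmx A -> intmx (- A).
Proof. by move=> /intmxP HA; apply/intmxP=> i j; rewrite mxE rpredN. Qed.
Lemma intmxB m n (A B : 'M[rat]_(m, n)) : intmx A -> intmx B -> intmx (A - B).
Proof. by move=> HA HB; apply: intmxD HA (intmxN HB). Qed.
Lemma intmxM m n p (A : 'M[rat]_(m, n)) (B : 'M[rat]_(n, p)) :
  intmx A -> intmx B -> intmx (A *m B).
Proof.
move=> /intmxP HA /intmxP HB; apply/intmxP=> i j; rewrite mxE.
by apply: rpred_sum => k _; rewrite rpredM.
Qed.
Lemma intmx0 m n : intmx (0 : 'M[rat]_(m, n)).
Proof. by apply/intmxP=> i j; rewrite mxE. Qed.
Lemma intmx_scalar n (z : int) : intmx (z%:~R%:M : 'M[rat]_n).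
Proof. by apply/intmxP=> i j; rewrite mxE; apply: rpredMn; exact: intr_int. Qed.
Lemma intmx1 n : intmx (1%:M : 'M[rat]_n).
Proof. by have := @intmx_scalar n 1. Qed.
Lemma intmxZ m n (z : int) (A : 'M[rat]_(m, n)) : intmx A -> intmx (z%:~R *: A).
Proof. by move=> /intmxP HA; apply/intmxP=> i j; rewrite mxE rpredM // intr_int. Qed.


Definition o3 (k : nat) (H : (k < 3)%N) : 'I_3 := Ordinal H.

Lemma alpha0 j : alpha (@Ordinal 3 0 isT) 0 j = if val j == 0%N then 1 else 0.
Proof. by rewrite /alpha /= mxE. Qed.
Lemma alpha1 j : alpha (@Ordinal 3 1 isT) 0 j = if val j == 1%N then 1 else 0.
Proof. by rewrite /alpha /= mxE. Qed.
Lemma alpha2 j : alpha (@Ordinal 3 2 isT) 0 j = -1.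
Proof. by rewrite /alpha /= mxE. Qed.

Lemma ord3_cases (m : 'I_3) :
  [\/ m = @Ordinal 3 0 isT, m = @Ordinal 3 1 isT | m = @Ordinal 3 2 isT].
Proof. by case: m => [[|[|[|]]] Hm] //; [constructor 1|constructor 2|constructor 3]; apply: val_inj. Qed.

Lemma alphaE (m : 'I_3) j : alpha m 0 j =
  if val m == 0%N then (if val j == 0%N then 1 else 0)
  else if val m == 1%N then (if val j == 1%N then 1 else 0) else -1.
Proof. by rewrite /alpha; case: ifP => _; [|case: ifP => _]; rewrite mxE. Qed.

Lemma alpha_sum (q : 'S_3) j : \sum_(m < 3) alpha (q m) 0 j = 0.
Proof.
rewrite (reindex_inj (@perm_inj _ q^-1)) /=.
under eq_bigr do rewrite permKV.
rewrite !big_ord_recl big_ord0 !alphaE /=.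
by case: j => [[|[|]]] //= _.
Qed.

Lemma alpha_lin (m : 'I_3) (q : 'S_3) j :
  \sum_(k < 2) alpha m 0 k * alpha (q (widen_ord (isT : (2 <= 3)%N) k)) 0 j
  = alpha (q m) 0 j.
Proof.
rewrite big_ord_recr big_ord1 /=.
have -> : widen_ord (isT : (2 <= 3)%N) (widen_ord (leqnSn 1) ord0) = @Ordinal 3 0 isT by apply: val_inj.
have -> : widen_ord (isT : (2 <= 3)%N) ord_max = @Ordinal 3 1 isT by apply: val_inj.
have Hs := alpha_sum q j.
rewrite !big_ord_recl big_ord0 addr0 in Hs.
have E0 : (@ord0 2) = @Ordinal 3 0 isT by apply: val_inj.
have E1 : lift ord0 (@ord0 1) = @Ordinal 3 1 isT by apply: val_inj.
have E2 : lift ord0 (lift ord0 (@ord0 0)) = @Ordinal 3 2 isT by apply: val_inj.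
rewrite E2 E1 E0 in Hs.
case: (ord3_cases m) => ->; rewrite ?alpha0 ?alpha1 ?alpha2 /=.
- by rewrite mul1r mul0r addr0.
- by rewrite mul0r mul1r add0r.
- apply/eqP; rewrite -subr_eq0 -Hs; apply/eqP.
  rewrite !mulN1r; move: Hs.
  set a := alpha _ 0 j; set b := alpha _ 0 j; set c := alpha _ 0 j; move=> Hs.
  lra.
Qed.

Lemma XmatM (p q : 'S_3) : Xmat (p * q)%g = Xmat p *m Xmat q.
Proof.
apply/matrixP=> i j; rewrite !mxE permM -alpha_lin.
by apply: eq_bigr => k _; rewrite !mxE.
Qed.

Lemma Xmat1 : Xmat 1%g = 1%:M.
Proof.
apply/matrixP=> i j; rewrite !mxE perm1 alphaE /=.
by case: i => [[|[|]]] Hi //; case: j => [[|[|]]] Hj.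
Qed.

Lemma intmx_Xmat p : intmx (Xmat p).
Proof.
apply/intmxP=> i j; rewrite mxE.
case: (ord3_cases (p (widen_ord (isT : (2 <= 3)%N) i))) => ->;
  rewrite alphaE /=; try case: ifP => _; by rewrite ?rpredN ?rpred0 ?rpred1.
Qed.


Definition O0 : 'I_3 := @Ordinal 3 0 isT.
Definition O1 : 'I_3 := @Ordinal 3 1 isT.
Definition O2 : 'I_3 := @Ordinal 3 2 isT.
Definition tt3 : 'S_3 := tperm O0 O1.
Definition cc3 : 'S_3 := (tperm O0 O1 * tperm O0 O2)%g.

Lemma odd_tt3 : odd_perm tt3. Proof. by rewrite odd_tperm. Qed.
Lemma odd_cc3 : odd_perm cc3 = false. Proof. by rewrite odd_permM !odd_tperm. Qed.

Lemma w0 : widen_ord (isT : (2 <= 3)%N) (@Ordinal 2 0 isT) = O0. Proof. exact: val_inj. Qed.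
Lemma w1 : widen_ord (isT : (2 <= 3)%N) (@Ordinal 2 1 isT) = O1. Proof. exact: val_inj. Qed.

Lemma tt3_0 : tt3 O0 = O1. Proof. by rewrite tpermL. Qed.
Lemma tt3_1 : tt3 O1 = O0. Proof. by rewrite tpermR. Qed.
Lemma cc3_0 : cc3 O0 = O1. Proof. by rewrite permM tpermL tpermD. Qed.
Lemma cc3_1 : cc3 O1 = O2. Proof. by rewrite permM tpermR tpermL. Qed.

Lemma XtM_E p (M : 'M[rat]_(2, 8)) k j :
  ((Xmat p)^T *m M) k j =
  alpha (p O0) 0 k * M (@Ordinal 2 0 isT) j + alpha (p O1) 0 k * M (@Ordinal 2 1 isT) j.
Proof.
rewrite mxE big_ord_recr big_ord1 /= !mxE.
have -> : (widen_ord (leqnSn 1) ord0) = @Ordinal 2 0 isT by apply: val_inj.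
have -> : (@ord_max 1) = @Ordinal 2 1 isT by apply: val_inj.
by rewrite w0 w1.
Qed.

Lemma int_eq' (x y : rat) : x \is a Num.int -> x = y -> y \is a Num.int.
Proof. by move=> H <-. Qed.

Lemma intN' (x : rat) : x \is a Num.int -> - x \is a Num.int.
Proof. by rewrite rpredN. Qed.

Lemma int_of_c (M : 'M[rat]_(2, 8)) :
  intmx ((Xmat cc3)^T *m M - M) ->
  intmx ((3 : int)%:~R *: M) /\ intmx ((Xmat tt3)^T *m M + M).
Proof.
move=> /intmxP H.
have H0 j : - M (@Ordinal 2 0 isT) j - M (@Ordinal 2 1 isT) j \is a Num.int.
  have := H (@Ordinal 2 0 isT) j; rewrite mxE.
  rewrite (XtM_E cc3 M) cc3_0 cc3_1 !alphaE /= mxE.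
  by move/int_eq'; apply; lra.
have H1 j : M (@Ordinal 2 0 isT) j - 2%:R * M (@Ordinal 2 1 isT) j \is a Num.int.
  have := H (@Ordinal 2 1 isT) j; rewrite mxE.
  rewrite (XtM_E cc3 M) cc3_0 cc3_1 !alphaE /= mxE.
  by move/int_eq'; apply; lra.
split; apply/intmxP => i j.
- rewrite !mxE; case: i => [[|[|]]] Hi //.
  + have -> : Ordinal Hi = @Ordinal 2 0 isT by apply: val_inj.
    have := rpredB (H1 j) (rpredMn 2 (H0 j)).
    by move/int_eq'; apply; rewrite -[(3:int)%:~R]/(3%:R); lra.
  + have -> : Ordinal Hi = @Ordinal 2 1 isT by apply: val_inj.
    have := rpredB (intN' (H0 j)) (H1 j).
    by move/int_eq'; apply; rewrite -[(3:int)%:~R]/(3%:R); lra.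
- rewrite mxE (XtM_E tt3 M) tt3_0 tt3_1 !alphaE /=.
  case: i => [[|[|]]] Hi //=.
  + have -> : Ordinal Hi = @Ordinal 2 0 isT by apply: val_inj.
    have := intN' (H0 j).
    by move/int_eq'; apply; lra.
  + have -> : Ordinal Hi = @Ordinal 2 1 isT by apply: val_inj.
    have := intN' (H0 j).
    by move/int_eq'; apply; lra.
Qed.


Definition eps (p : 'S_3) : rat := if odd_perm p then -1 else 1.
Definition fS (p : 'S_3) : G := (p, (eps p)%:M).
Definition Cond (M : 'M[rat]_(2, 8)) :=
  forall c : 'S_3, ~~ odd_perm c -> intmx ((Xmat c)^T *m M - M).

Section Lat.
Variable L : V -> Prop.
Hypothesis HL : overlattice L.

Lemma L_QR v : inQR v -> L v. Proof. by case: HL => _ H _; apply: H. Qed.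
Lemma L_sub u w : L u -> L w -> L (vsub u w). Proof. by case: HL => H _ _; apply: H. Qed.
Lemma L_zero : L (0, 0).
Proof. by apply: L_QR; split; apply: intmx0. Qed.
Lemma L_add u w : L u -> L w -> L (u.1 + w.1, u.2 + w.2).
Proof.
move=> Hu Hw; have := L_sub Hu (L_sub L_zero Hw).
by rewrite /vsub /= !sub0r !opprK.
Qed.
End Lat.

Lemma act_mul x y v : Defs.act (mulG x y) v = Defs.act y (Defs.act x v).
Proof.
case: x y v => [p g] [q h] [M r]; rewrite /Defs.act /mulG /= XmatM trmx_mul.
by rewrite !mulmxA.
Qed.

Definition N3 (x : G) : Prop := x.2 = 1%:M /\ ~~ odd_perm x.1.

Lemma card_even : #|[pred p : 'S_3 | ~~ odd_perm p]| = 3%N.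
Proof.
have H := @card_Alt (ordinal 3); rewrite card_ord in H.
have := H isT => /= E.
have E2 : #|Alt (ordinal 3)| = 3%N by move: E; rewrite /factorial /=; lia.
rewrite -[RHS]E2; apply: eq_card => p; by rewrite Alt_even inE.
Qed.

Lemma OE8_1 : OE8 1%:M.
Proof. by split; [apply: intmx1 | rewrite trmx1 mul1mx mulmx1]. Qed.

Lemma N3_normal : normal3sub N3.
Proof.
split.
- by move=> [p g] [/= -> _]; apply: OE8_1.
- by split => //=; rewrite odd_perm1.
- move=> [p g] [q h] [/= -> Hp] [/= -> Hq]; split; rewrite /= ?mulmx1 //.
  by rewrite odd_permM (negbTE Hp) (negbTE Hq).
- move=> [p g] [q h] _ [/= -> Hq].
  exists ((p * q * p^-1)%g, 1%:M).
    by split => //=; rewrite !odd_permM odd_permV (negbTE Hq) addbC addbA addbb.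
  by rewrite /mulG /= mulmx1 mul1mx -mulgA mulVg mulg1.
- exists [seq (p, 1%:M) | p <- enum [pred p : 'S_3 | ~~ odd_perm p]], 1%N; split.
  + rewrite map_inj_uniq ?enum_uniq //; by move=> p q [].
  + by rewrite size_map -cardE card_even.
  + move=> [p g]; split.
    * by move=> [/= -> Hp]; apply/mapP; exists p => //; rewrite mem_enum.
    * by move/mapP=> [q]; rewrite mem_enum => Hq [-> ->].
Qed.

Lemma intmx_tr m n (A : 'M[rat]_(m, n)) : intmx A -> intmx A^T.
Proof. by move=> /intmxP H; apply/intmxP => i j; rewrite mxE. Qed.

Lemma epsM p q : eps (p * q)%g = eps p * eps q.
Proof. by rewrite /eps odd_permM; case: (odd_perm p); case: (odd_perm q); rewrite ?mulr1 ?mul1r ?mulrNN ?mulr1. Qed.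

Lemma fS_mul p q : mulG (fS p) (fS q) = fS (p * q)%g.
Proof. by rewrite /mulG /fS /= epsM scalar_mxM. Qed.

Section Main1.
Variable L : V -> Prop.
Hypothesis HL : overlattice L.
Hypothesis H3 : forall M : 'M[rat]_(2, 8), L (M, 0) <-> intmx M.
Hypothesis H5 : forall N, normal3sub N -> forall x, N x -> stabilizes L x.

Lemma L_cond v : L v -> Cond v.1.
Proof.
move=> Lv c Hc.
have S := H5 N3_normal (x := (c, 1%:M)) (conj erefl Hc).
have Lw := (S v).1 Lv.
have := L_sub HL Lw Lv; rewrite /vsub /Defs.act /= subrr mulmx1.
by move/H3.
Qed.

Lemma Cond_mul q M : Cond M -> Cond ((Xmat q)^T *m M).
Proof.
move=> HM c Hc.
have -> : (Xmat c)^T *m ((Xmat q)^T *m M) - (Xmat q)^T *m M =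
   (Xmat q)^T *m ((Xmat (c ^ q^-1)%g)^T *m M - M).
  rewrite mulmxBr !mulmxA -!trmx_mul -!XmatM; congr (_ *m _ - _).
  by rewrite conjgE invgK -!mulgA mulVg mulg1.
apply: intmxM; first by apply: intmx_tr; apply: intmx_Xmat.
by apply: HM; rewrite odd_permJ.
Qed.

Lemma Cond_eps p M : Cond M -> intmx (eps p *: ((Xmat p)^T *m M) - M).
Proof.
move=> HM; rewrite /eps; case: ifP => Hp.
- have Hc' : ~~ odd_perm (tt3^-1 * p)%g.
    by rewrite odd_permM odd_permV odd_tt3 Hp.
  have -> : p = (tt3 * (tt3^-1 * p))%g by rewrite mulKVg.
  rewrite XmatM trmx_mul -mulmxA scaleN1r.
  have -> : - ((Xmat (tt3^-1 * p)%g)^T *m ((Xmat tt3)^T *m M)) - M =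
     - ((Xmat (tt3^-1 * p)%g)^T *m ((Xmat tt3)^T *m M) - (Xmat tt3)^T *m M)
     - ((Xmat tt3)^T *m M + M).
    by rewrite opprB opprD addrACA subrr add0r.
  apply: intmxB; first by apply: intmxN; apply: Cond_mul.
  by have [_] := int_of_c (HM cc3 (negbT odd_cc3)).
- by rewrite scale1r; apply: HM; rewrite Hp.
Qed.

Lemma fS_fwd p v : L v -> L (Defs.act (fS p) v).
Proof.
move=> Lv; have Hd : L (eps p *: ((Xmat p)^T *m v.1) - v.1, 0).
  by apply/H3; apply: Cond_eps; apply: L_cond.
have := L_add HL Lv Hd; case: v Lv Hd => M r /= _ _.
by rewrite addr0 addrC subrK /Defs.act /= mul_mx_scalar.
Qed.

Lemma fS_stab p : stabilizes L (fS p).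
Proof.
move=> v; split; first exact: fS_fwd.
move=> H; have := fS_fwd (p^-1)%g H; rewrite -act_mul fS_mul mulgV.
by case: v {H} => M r; rewrite /Defs.act /fS /eps odd_perm1 /= Xmat1 trmx1 mul1mx mulmx1.
Qed.
End Main1.


Lemma mulmx_delta m n p (B : 'M[rat]_(m, n)) (i : 'I_n) (j : 'I_p) a b :
  (B *m delta_mx i j) a b = B a i * (b == j)%:R.
Proof.
rewrite mxE (bigD1 i) //= big1 ?addr0; first by rewrite mxE eqxx.
by move=> k /negbTE Hk; rewrite mxE Hk mulr0.
Qed.

Lemma mulmx_delta_mul m n p q (B : 'M[rat]_(m, n)) (i : 'I_n) (j : 'I_p)
  (C : 'M[rat]_(p, q)) a b :
  (B *m delta_mx i j *m C) a b = B a i * C j b.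
Proof.
rewrite mxE (bigD1 j) //= big1 ?addr0; first by rewrite mulmx_delta eqxx mulr1.
by move=> k /negbTE Hk; rewrite mulmx_delta Hk mulr0 mul0r.
Qed.

Lemma E8sym : E8gram^T = E8gram.
Proof.
apply/matrixP => a b; rewrite !mxE eq_sym.
by case: (b == a) => //; rewrite orbC.
Qed.

Lemma E8diag i : E8gram i i = 2.
Proof. by rewrite mxE eqxx. Qed.

Lemma intE8 : intmx E8gram.
Proof.
apply/intmxP => a b; rewrite mxE.
by case: ifP => _; [|case: ifP => _]; rewrite ?rpredN ?rpred0 ?rpred1 ?rpred_nat.
Qed.

Lemma intdelta n (i j : 'I_n) : intmx (delta_mx i j : 'M[rat]_n).
Proof. by apply/intmxP => a b; rewrite mxE; case: (_ && _); rewrite ?rpred0 ?rpred1. Qed.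

Definition refl (i : 'I_8) : 'M[rat]_8 := 1%:M - E8gram *m delta_mx i i.

Lemma dEd (i : 'I_8) : delta_mx i i *m E8gram *m delta_mx i i = 2%:R *: delta_mx i i.
Proof.
apply/matrixP => a b; rewrite mulmx_delta [in RHS]mxE mxE.
rewrite mxE (bigD1 i) //= big1 ?addr0.
  rewrite mxE eqxx andbT E8diag.
  by case: (a == i); case: (b == i); rewrite /= ?mulr0 ?mul0r ?mulr1 ?mul1r.
by move=> k /negbTE Hk; rewrite mxE Hk andbF mul0r.
Qed.

Lemma OE8_refl i : OE8 (refl i).
Proof.
split.
  by apply: intmxB; [apply: intmx1 | apply: intmxM; [apply: intE8 | apply: intdelta]].
rewrite /refl linearB /= trmx1 trmx_mul trmx_delta E8sym.
rewrite mulmxBl mul1mx mulmxBl !mulmxBr !mulmx1.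
have -> : E8gram *m delta_mx i i *m E8gram *m (delta_mx i i *m E8gram) =
   2%:R *: (E8gram *m delta_mx i i *m E8gram).
  have H : E8gram *m delta_mx i i *m E8gram *m (delta_mx i i *m E8gram) =
    E8gram *m (delta_mx i i *m E8gram *m delta_mx i i) *m E8gram by rewrite !mulmxA.
  by rewrite H dEd -scalemxAr -scalemxAl.
rewrite !mulmxA.
set P := E8gram *m delta_mx i i *m E8gram.
by apply/matrixP => a b; rewrite !mxE; set x := P a b; lra.
Qed.

Lemma center_rel (g : 'M[rat]_8) i a k :
  g *m refl i = refl i *m g ->
  (g *m E8gram) a i * (k == i)%:R = E8gram a i * g i k.
Proof.
rewrite /refl mulmxBr mulmx1 mulmxBl mul1mx => /addrI/oppr_inj H.
have : (E8gram *m delta_mx i i *m g) a k = (g *m (E8gram *m delta_mx i i)) a k.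
  by rewrite -H.
by rewrite mulmx_delta_mul mulmxA mulmx_delta => ->.
Qed.

Lemma center_pm (g : 'M[rat]_8) : ZE8 g -> g = 1%:M \/ g = - 1%:M.
Proof.
move=> [[_ HO] HC].
have R i a k := center_rel a k (HC _ (OE8_refl i)).
have Hoff i k : k != i -> g i k = 0.
  move=> /negbTE Hk; have := R i i k; rewrite Hk mulr0 E8diag => /esym /eqP.
  by rewrite mulf_eq0 => /orP [/eqP //|/eqP].
have gE a i : (g *m E8gram) a i = g a a * E8gram a i.
  rewrite mxE (bigD1 a) //= big1 ?addr0 //.
  by move=> l Hl; rewrite Hoff ?mul0r // eq_sym.
have Hadj a i : E8gram a i = -1 -> g a a = g i i.
  move=> Ha; have := R i a i; rewrite eqxx mulr1 gE Ha.
  by move=> H; lra.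
pose o (n : nat) (H : (n < 8)%N) := @Ordinal 8 n H.
have e20 := Hadj (o 2 isT) (o 0 isT) ltac:(by rewrite mxE).
have e32 := Hadj (o 3 isT) (o 2 isT) ltac:(by rewrite mxE).
have e43 := Hadj (o 4 isT) (o 3 isT) ltac:(by rewrite mxE).
have e54 := Hadj (o 5 isT) (o 4 isT) ltac:(by rewrite mxE).
have e65 := Hadj (o 6 isT) (o 5 isT) ltac:(by rewrite mxE).
have e76 := Hadj (o 7 isT) (o 6 isT) ltac:(by rewrite mxE).
have e13 := Hadj (o 1 isT) (o 3 isT) ltac:(by rewrite mxE).
set l := g (o 0 isT) (o 0 isT).
have Hd a : g a a = l.
  case: a => [[|[|[|[|[|[|[|[|]]]]]]]] Ha] //; rewrite (bool_irrelevance Ha isT);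
  by rewrite ?e13 ?e76 ?e65 ?e54 ?e43 ?e32 ?e20.
have Hg : g = l%:M.
  apply/matrixP => a b; rewrite mxE; case: eqP => [<-|/eqP Hab]; first by rewrite Hd.
  by rewrite Hoff // eq_sym.
rewrite Hg in HO; move: HO.
rewrite tr_scalar_mx mul_mx_scalar mul_scalar_mx scalerA => /matrixP /(_ (o 0 isT) (o 0 isT)).
rewrite mxE E8diag => H.
have : l ^+ 2 == 1 by rewrite expr2; apply/eqP; lra.
rewrite sqrf_eq1 => /orP [/eqP El|/eqP El]; [left|right]; rewrite Hg El //.
by apply/matrixP => a b; rewrite !mxE mulNrn.
Qed.


Lemma other3 (x a : 'I_3) : exists b : 'I_3, (b != x) && (b != a).
Proof.
case: (ord3_cases x) => ->; case: (ord3_cases a) => ->;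
first [by exists O0 | by exists O1 | by exists O2].
Qed.

Lemma Z_S3 (q : 'S_3) : (forall p, (q * p = p * q)%g) -> q = 1%g.
Proof.
move=> Hq.
have Ht x a : tperm x a (q x) = q a.
  have E : (tperm x a ^ q)%g = tperm x a by rewrite conjgE -Hq mulKg.
  by rewrite -{1}E tpermJ tpermL.
apply/permP => x; rewrite perm1; apply/eqP; apply/negPn/negP => Hxa.
set a := q x in Hxa.
have Hqa : q a = x by rewrite -(Ht x a) tpermR.
have [b /andP [Hbx Hba]] : exists b : 'I_3, (b != x) && (b != a).
  exact: other3.
have := Ht x b; rewrite /a tpermD.
- by move/perm_inj => E; rewrite E eqxx in Hbx.
- by rewrite eq_sym.
- exact: Hba.
Qed.

Lemma stab_mul L x y : stabilizes L x -> stabilizes L y -> stabilizes L (mulG x y).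
Proof. by move=> Hx Hy v; rewrite act_mul; rewrite (Hx v) (Hy (Defs.act x v)). Qed.

Lemma eps_pm p : eps p = 1 \/ eps p = -1.
Proof. by rewrite /eps; case: odd_perm; [right|left]. Qed.

Lemma eps2 p : eps p * eps p = 1.
Proof. by case: (eps_pm p) => ->; rewrite ?mulr1 ?mulrNN ?mulr1. Qed.

Lemma ZE8_eps p : ZE8 (eps p)%:M.
Proof.
split; last by move=> h _; rewrite scalar_mxC.
split.
- apply/intmxP => i j; rewrite mxE; apply: rpredMn.
  by case: (eps_pm p) => ->; rewrite ?rpredN rpred1.
- by rewrite tr_scalar_mx mul_mx_scalar mul_scalar_mx scalerA eps2 scale1r.
Qed.

Lemma scalarN1 : ((-1 : rat)%:M : 'M[rat]_8) = - 1%:M.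
Proof. by apply/matrixP => a b; rewrite !mxE mulNrn. Qed.

Lemma stab_only (L : V -> Prop) :
  overlattice L ->
  (exists v, L v /\ ~ inQR v) ->
  (forall M : 'M[rat]_(2, 8), L (M, 0) <-> intmx M) ->
  (forall r : 'rV[rat]_8, L (0, r) <-> intmx r) ->
  (forall N, normal3sub N -> forall x, N x -> stabilizes L x) ->
  forall x, StabXZY L x -> exists p, x = fS p.
Proof.
move=> HL [v0 [Lv0 nv0]] H3 H4 H5 [p g] [HZ Hs].
have Hm := stab_mul Hs (fS_stab HL H3 H5 (p^-1)%g).
rewrite /mulG /fS /= mulgV /eps odd_permV in Hm.
have Hneg : ~ stabilizes L (1%g, - 1%:M).
  move=> Hn; apply: nv0; case: v0 Lv0 Hn => M r Lv Hn.
  have Lw := (Hn (M, r)).1 Lv.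
  rewrite /Defs.act /= Xmat1 trmx1 mul1mx mulmxN mulmx1 in Lw.
  have L2 := L_sub HL Lv Lw; rewrite /vsub /= subrr opprK in L2.
  have I2 := (H3 _).1 L2.
  have [I3 _] := int_of_c (L_cond HL H3 H5 Lv (negbT odd_cc3)).
  have IM : intmx M.
    have -> : M = (3 : int)%:~R *: M - (M + M).
      by apply/matrixP => i j; rewrite !mxE; set a := M i j; rewrite [(3:int)%:~R]/=; lra.
    exact: intmxB.
  split => //; apply/H4.
  have := L_sub HL Lv ((H3 M).2 IM); rewrite /vsub /= subrr subr0; done.
case: (center_pm (HZ : ZE8 g)) => Hg; rewrite Hg in Hm *; case Ho: (odd_perm p) Hm => Hm.
- exfalso; apply: Hneg; move: Hm; rewrite mul1mx.
  by rewrite scalarN1.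
- by exists p; rewrite /fS /eps Ho.
- by exists p; rewrite /fS /eps Ho; rewrite scalarN1.
- exfalso; apply: Hneg; move: Hm; by rewrite mulmx1.
Qed.

Theorem lemma5p3 (L : V -> Prop) :
  overlattice L ->
  (exists v, L v /\ ~ inQR v) ->
  (forall M : 'M[rat]_(2, 8), L (M, 0) <-> intmx M) ->
  (forall r : 'rV[rat]_8, L (0, r) <-> intmx r) ->
  (forall N, normal3sub N -> forall x, N x -> stabilizes L x) ->
  isoSym3 (StabXZY L) /\ (forall x, centXY (StabXZY L) x <-> inY x).
Proof.
move=> HL Hv H3 H4 H5.
have Sonly := stab_only HL Hv H3 H4 H5.
have Sf p : StabXZY L (fS p) by split; [apply: ZE8_eps | apply: fS_stab].
split.
  exists fS; split.
  - by move=> p q [].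
  - by move=> p q; rewrite fS_mul.
  - move=> x; split; first exact: Sonly.
    by move=> [p ->].
move=> [q h]; split.
- move=> [Hxy Hc]; split => //.
  apply: Z_S3 => p; have := Hc _ (Sf p).
  by rewrite /mulG /fS /= => [[]].
- move=> [/= -> Ho]; split => // s Hs.
  have [p ->] := Sonly _ Hs.
  by rewrite /mulG /fS /= mul1g mulg1 scalar_mxC.
Qed.
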